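(* For every intuitionistic formula $\varphi$ in $p_1,\dots,p_n$, every model $M$ and every $x\in M^s$, \[ M^s,x\models\varphi\iff M^s,x\models s(\varphi). \]
   Context: $F_{HA}(n)$ is the free Heyting algebra on $p_1,\dots,p_n$ (intuitionistic formulas modulo IPC-equivalence) and $F_{\wedge,\to}(n)$ the free implicative meet-semilattice on $p_1,\dots,p_n$ ($(\wedge,\to)$-formulas modulo IPC-equivalence). $F_{\wedge,\to}(n)$ is finite, hence a Heyting algebra with join $\varphi\veebar\psi=\bigwedge\{\chi\in F_{\wedge,\to}(n): \varphi\le\chi,\ \psi\le\chi\}$ and bottom $p_1\wedge\cdots\wedge p_n$. $s:F_{HA}(n)\to F_{\wedge,\to}(n)$ is the unique Heyting homomorphism with $s(p_i)=p_i$; concretely $s(\varphi)$ is obtained by replacing each $\vee$ by $\veebar$ and $\bot$ by $p_1\wedge\cdots\wedge p_n$; $s(\varphi)$ is taken to be any $(\wedge,\to)$-formula representing this class. Models are posets with an order-preserving colouring $c:M\to\{0,1\}^n$ (componentwise order) and intuitionistic Kripke semantics ($x\models p_i$ iff $c(x)_i=1$). A point $x$ is separated if for some variable $q$, $x\not\models q$ but all $y>x$ satisfy $q$. $M^s$ is the set of separated points with the restricted order and colouring, regarded as a model in its own right. *)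

(* Defs.v *)
From Stdlib Require Import List ProofIrrelevance.
From mathcomp Require Import all_boot.
Set Implicit Arguments. Unset Strict Implicit. Unset Printing Implicit Defensive.

Inductive form (n : nat) : Type :=
| Var : 'I_n -> form n
| Top : form n
| Bot : form n
| And : form n -> form n -> form n
| Or  : form n -> form n -> form n
| Imp : form n -> form n -> form n.
Arguments Top {n}. Arguments Bot {n}.

Fixpoint is_imp n (f : form n) : bool :=
  match f with
  | Var _ | Top => true
  | Bot | Or _ _ => false
  | And a b | Imp a b => is_imp a && is_imp b
  end.

Inductive ded n : seq (form n) -> form n -> Prop :=
| d_ax   (G : seq (form n)) a : List.In a G -> ded G a
| d_topI G : ded G Top
| d_botE G a : ded G Bot -> ded G a
| d_andI G a b : ded G a -> ded G b -> ded G (And a b)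
| d_andE1 G a b : ded G (And a b) -> ded G a
| d_andE2 G a b : ded G (And a b) -> ded G b
| d_orI1 G a b : ded G a -> ded G (Or a b)
| d_orI2 G a b : ded G b -> ded G (Or a b)
| d_orE G a b c : ded G (Or a b) -> ded (a :: G) c -> ded (b :: G) c -> ded G c
| d_impI G a b : ded (a :: G) b -> ded G (Imp a b)
| d_impE G a b : ded G (Imp a b) -> ded G a -> ded G b.

(* IPC order and equivalence on formulas (the orders of F_HA(n), F_{/\,->}(n)). *)
Definition ipc_le n (a b : form n) : Prop := ded [:: a] b.
Definition ipc_eqv n (a b : form n) : Prop := ipc_le a b /\ ipc_le b a.

(* Bottom of F_{/\,->}(n): p_1 /\ ... /\ p_n (with a trailing Top, which is
   IPC-equivalent; for n = 0 it is Top, the empty meet). *)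
Definition bigconj n : form n := foldr (fun i f => And (Var i) f) Top (enum 'I_n).

(* c represents the join a \veebar b in F_{/\,->}(n):
   the meet of all (/\,->)-classes chi above a and b. *)
Definition is_vjoin n (a b c : form n) : Prop :=
  is_imp c /\
  (forall chi, is_imp chi -> ipc_le a chi -> ipc_le b chi -> ipc_le c chi) /\
  (forall d, is_imp d ->
     (forall chi, is_imp chi -> ipc_le a chi -> ipc_le b chi -> ipc_le d chi) ->
     ipc_le d c).

(* srep phi psi : psi is a (/\,->)-formula representing s(phi), where s
   replaces \/ by \veebar and Bot by p_1 /\ ... /\ p_n. *)
Inductive srep n : form n -> form n -> Prop :=
| s_var i : srep (Var i) (Var i)
| s_top : srep Top Top
| s_bot : srep Bot (bigconj n)
| s_and a b a' b' : srep a a' -> srep b b' -> srep (And a b) (And a' b')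
| s_imp a b a' b' : srep a a' -> srep b b' -> srep (Imp a b) (Imp a' b')
| s_or a b a' b' c : srep a a' -> srep b b' -> is_vjoin a' b' c -> srep (Or a b) c
| s_eqv a c c' : srep a c -> is_imp c' -> ipc_eqv c c' -> srep a c'.

Record model (n : nat) : Type := Model {
  carrier :> Type;
  mle : carrier -> carrier -> Prop;
  mle_refl : forall x, mle x x;
  mle_anti : forall x y, mle x y -> mle y x -> x = y;
  mle_trans : forall x y z, mle x y -> mle y z -> mle x z;
  col : carrier -> 'I_n -> bool;
  col_mono : forall x y i, mle x y -> col x i -> col y i
}.

Fixpoint sat n (M : model n) (x : M) (f : form n) : Prop :=
  match f with
  | Var i => col x i
  | Top => True
  | Bot => False
  | And a b => sat x a /\ sat x b
  | Or a b => sat x a \/ sat x b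
  | Imp a b => forall y, mle x y -> sat y a -> sat y b
  end.

Definition separated n (M : model n) (x : M) : Prop :=
  exists i, ~~ col x i /\ (forall y, mle x y -> y <> x -> col y i).

Definition sep_carrier n (M : model n) := {x : M | separated x}.

Section Sep.
Variables (n : nat) (M : model n).
Definition sep_le (x y : sep_carrier M) := mle (proj1_sig x) (proj1_sig y).
Lemma sep_refl x : sep_le x x. Proof. exact: mle_refl. Qed.
Lemma sep_anti x y : sep_le x y -> sep_le y x -> x = y.
Proof.
case: x y => [x px] [y py]; rewrite /sep_le /= => h1 h2.
have E := mle_anti h1 h2; subst y.
by rewrite (proof_irrelevance _ px py).
Qed.
Lemma sep_trans x y z : sep_le x y -> sep_le y z -> sep_le x z.
Proof. exact: mle_trans. Qed.
Definition sep_col (x : sep_carrier M) i := col (proj1_sig x) i.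
Lemma sep_col_mono x y i : sep_le x y -> sep_col x i -> sep_col y i.
Proof. exact: col_mono. Qed.
Definition sep_model : model n :=
  @Model n (sep_carrier M) sep_le sep_refl sep_anti sep_trans sep_col sep_col_mono.
End Sep.

(* Main.v *)
Require Import Defs.
From mathcomp Require Import all_boot.
From Stdlib Require Import Classical.

Lemma sat_mono n (M : model n) (a : form n) :
  forall x y : M, mle x y -> sat x a -> sat y a.
Proof.
induction a as [i| | |a IHa b IHb|a IHa b IHb|a IHa b IHb]; simpl; intros x y Hxy H.
- exact: col_mono Hxy H.
- exact I.
- exact H.
- destruct H; split; eauto.
- destruct H; [left|right]; eauto.
- intros z Hyz; apply H; exact: mle_trans Hxy Hyz.
Qed.

Lemma sound n (G : seq (form n)) a (H : ded G a) :
  forall (M : model n) (x : M), (forall g, List.In g G -> sat x g) -> sat x a.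
Proof.
induction H; simpl; intros M x HG.
- auto.
- exact I.
- destruct (IHded M x HG).
- split; eauto.
- destruct (IHded M x HG); auto.
- destruct (IHded M x HG); auto.
- left; eauto.
- right; eauto.
- destruct (IHded1 M x HG) as [Ha|Hb].
  + apply IHded2; intros g [<-|Hg]; auto.
  + apply IHded3; intros g [<-|Hg]; auto.
- intros y Hxy Ha; apply IHded; intros g [<-|Hg]; auto.
  apply (@sat_mono n M g x y Hxy); auto.
- apply (IHded1 M x HG x (mle_refl x)); exact: IHded2 M x HG.
Qed.

Lemma le_sat n (a b : form n) (M : model n) (x : M) :
  ipc_le a b -> sat x a -> sat x b.
Proof.
intros H Ha; apply (@sound n _ _ H); intros g [<-|[]]; exact Ha.
Qed.

Lemma bigconj_imp_aux n (l : seq 'I_n) :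
  is_imp (foldr (fun i f => And (Var i) f) Top l).
Proof. by elim: l => //= i l ->. Qed.

Lemma bigconj_sat_aux n (M : model n) (x : M) (l : seq 'I_n) :
  sat x (foldr (fun i f => And (Var i) f) Top l) -> forall i, i \in l -> col x i.
Proof.
elim: l => //= j l IH [Hj Hl] i; rewrite in_cons => /orP [/eqP ->|Hi]; auto.
Qed.

Lemma srep_imp n (a b : form n) : srep a b -> is_imp b.
Proof.
induction 1; simpl; auto.
- exact: bigconj_imp_aux.
- by rewrite IHsrep1 IHsrep2.
- by rewrite IHsrep1 IHsrep2.
- by case: H1.
Qed.

Theorem theorem3p18 (n : nat) (phi psi : form n) (Hs : srep phi psi)
  (M : model n) (x : sep_model M) :
  sat x phi <-> sat x psi.
Proof.
revert x; induction Hs; intros x; simpl.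
- tauto.
- tauto.
- split; [by []|].
  intro Hb. case: (proj2_sig x) => q [Hq _].
  have := @bigconj_sat_aux n (sep_model M) x (enum (ordinal n)) Hb q (mem_enum _ q).
  by rewrite /= /sep_col (negbTE Hq).
- rewrite IHHs1 IHHs2; tauto.
- split; intros H y Hxy; [rewrite -IHHs1 -IHHs2|rewrite IHHs1 IHHs2]; auto.
- have Ia := @srep_imp n _ _ Hs1. have Ib := @srep_imp n _ _ Hs2.
  case: H => [Hc [Hub Hleast]].
  have Lac : ipc_le a' c by apply Hleast.
  have Lbc : ipc_le b' c by apply Hleast.
  rewrite IHHs1 IHHs2; split.
  + case=> H; [exact: @le_sat n _ _ _ x Lac H|exact: @le_sat n _ _ _ x Lbc H].
  + intro Hcx.
    destruct (classic (sat x a')) as [Ha|Na]; [by left|].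
    destruct (classic (sat x b')) as [Hb|Nb]; [by right|].
    exfalso.
    case: (proj2_sig x) => q [Hq Hsep].
    pose chi := Imp (And (Imp a' (Var q)) (Imp b' (Var q))) (Var q).
    have Ichi : is_imp chi by rewrite /= Ia Ib.
    have La : ipc_le a' chi.
      apply: d_impI; apply: (@d_impE _ _ a'); [apply: d_andE1; apply: d_ax|apply: d_ax]; simpl; auto.
    have Lb : ipc_le b' chi.
      apply: d_impI; apply: (@d_impE _ _ b'); [apply: d_andE2; apply: d_ax|apply: d_ax]; simpl; auto.
    have Hchi : sat x chi := @le_sat n _ _ _ x (Hub chi Ichi La Lb) Hcx.
    have key : forall (d : form n), ~ sat x d -> sat x (Imp d (Var q)).
      intros d Nd y Hxy Hy.
      destruct (classic (y = x)) as [E|E]; [by subst|].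
      apply: Hsep => // E'.
      apply: E; apply: sep_anti => //.
      by rewrite /sep_le E'; apply: mle_refl.
    have := Hchi x (mle_refl x) (conj (key _ Na) (key _ Nb)).
    by rewrite /= /sep_col (negbTE Hq).
- split; intro H1; [exact: @le_sat n _ _ _ x (proj1 H0) (proj1 (IHHs x) H1)
                   |exact: (proj2 (IHHs x)) (@le_sat n _ _ _ x (proj2 H0) H1)].
Qed.
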